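(* Let $\mathsf V$ be a quantale, $X=(X,a)$ a $\mathsf V$-category, $(x_n)_{n\in\mathbb N}$ a Cauchy sequence in $X$ and $x\in X$. Then $$\bigvee_{N}\bigwedge_{n\ge N}a(x_n,x)=\bigwedge_{N}\bigvee_{n\ge N}a(x_n,x)\quad\text{and}\quad\bigvee_{N}\bigwedge_{n\ge N}a(x,x_n)=\bigwedge_{N}\bigvee_{n\ge N}a(x,x_n).$$
   Context: A quantale $(\mathsf V,\otimes,k)$ is a complete anti-symmetric lattice with an associative, commutative operation $\otimes$ with neutral element $k$ distributing over arbitrary suprema. A $\mathsf V$-category $(X,a)$ is a set with $a:X\times X\to\mathsf V$ such that $k\le a(x,x)$ and $a(x,y)\otimes a(y,z)\le a(x,z)$. A sequence $s=(x_n)$ is Cauchy if $k\le\bigvee_{N}\bigwedge_{n,m\ge N}a(x_n,x_m)$. *)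

(* Defs.v *)
(* A quantale is encoded as a complete lattice given by an
   arbitrary-supremum operator, with an associative commutative tensor
   with neutral element, distributing over arbitrary suprema. *)
From Stdlib Require Import Arith.

Record quantale := Quantale {
  qcar :> Type;
  qle : qcar -> qcar -> Prop;
  qsup : (qcar -> Prop) -> qcar;
  qten : qcar -> qcar -> qcar;
  qk : qcar;
  qle_refl : forall x, qle x x;
  qle_trans : forall x y z, qle x y -> qle y z -> qle x z;
  qle_antisym : forall x y, qle x y -> qle y x -> x = y;
  qsup_ub : forall (S : qcar -> Prop) x, S x -> qle x (qsup S);
  qsup_least : forall (S : qcar -> Prop) y,
      (forall x, S x -> qle x y) -> qle (qsup S) y;
  qten_assoc : forall x y z, qten x (qten y z) = qten (qten x y) z;
  qten_comm : forall x y, qten x y = qten y x;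
  qten_unit : forall x, qten qk x = x;
  qten_sup : forall x (S : qcar -> Prop),
      qten x (qsup S) = qsup (fun z => exists y, S y /\ z = qten x y)
}.

Arguments qle {q}.
Arguments qsup {q}.
Arguments qten {q}.
Arguments qk {q}.

Definition qinf {V : quantale} (S : V -> Prop) : V :=
  qsup (fun y => forall x, S x -> qle y x).

Definition qSup {V : quantale} {I : Type} (P : I -> Prop) (f : I -> V) : V :=
  qsup (fun z => exists i, P i /\ z = f i).
Definition qInf {V : quantale} {I : Type} (P : I -> Prop) (f : I -> V) : V :=
  qinf (fun z => exists i, P i /\ z = f i).

Definition is_Vcategory (V : quantale) (X : Type) (a : X -> X -> V) : Prop :=
  (forall x, qle qk (a x x)) /\
  (forall x y z, qle (qten (a x y) (a y z)) (a x z)).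

Definition is_Cauchy (V : quantale) (X : Type) (a : X -> X -> V)
  (s : nat -> X) : Prop :=
  qle qk (qSup (fun _ : nat => True) (fun N =>
            qInf (fun nm : nat * nat => N <= fst nm /\ N <= snd nm)
                 (fun nm => a (s (fst nm)) (s (snd nm))))).

Definition liminf_q {V : quantale} (f : nat -> V) : V :=
  qSup (fun _ : nat => True) (fun N => qInf (fun n => N <= n) f).
Definition limsup_q {V : quantale} (f : nat -> V) : V :=
  qInf (fun _ : nat => True) (fun N => qSup (fun n => N <= n) f).

(* Main.v *)
Require Import Defs.
From Stdlib Require Import Arith Lia.

Section Q.
Variable V : quantale.

Lemma sup_ub' {I} (P : I -> Prop) (f : I -> V) i : P i -> qle (f i) (qSup P f).
Proof. intros H. apply qsup_ub. exists i; auto. Qed.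

Lemma sup_least' {I} (P : I -> Prop) (f : I -> V) y :
  (forall i, P i -> qle (f i) y) -> qle (qSup P f) y.
Proof. intros H. apply qsup_least. intros z [i [Hi ->]]; auto. Qed.

Lemma inf_lb' {I} (P : I -> Prop) (f : I -> V) i : P i -> qle (qInf P f) (f i).
Proof. intros H. apply qsup_least. intros z Hz. apply Hz. exists i; auto. Qed.

Lemma inf_gl' {I} (P : I -> Prop) (f : I -> V) y :
  (forall i, P i -> qle y (f i)) -> qle y (qInf P f).
Proof. intros H. apply qsup_ub. intros z [i [Hi ->]]; auto. Qed.

Lemma ten_mono_r (x y y' : V) : qle y y' -> qle (qten x y) (qten x y').
Proof.
  intros H.
  assert (E : qsup (fun z => z = y \/ z = y') = y').
  { apply qle_antisym.
    - apply qsup_least. intros z [->| ->]; auto using qle_refl.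
    - apply qsup_ub; auto. }
  rewrite <- E, qten_sup. apply qsup_ub. exists y; split; auto.
Qed.

Lemma ten_mono_l (x y y' : V) : qle y y' -> qle (qten y x) (qten y' x).
Proof. intros H. rewrite (qten_comm _ y), (qten_comm _ y'). now apply ten_mono_r. Qed.

Lemma liminf_le_limsup (f : nat -> V) : qle (liminf_q f) (limsup_q f).
Proof.
  unfold liminf_q, limsup_q. apply sup_least'. intros N _.
  apply inf_gl'. intros M _. apply qle_trans with (f (max N M)).
  - apply inf_lb'. lia.
  - apply sup_ub'. lia.
Qed.

Lemma main (f : nat -> V) (c : nat -> V) :
  qle qk (qSup (fun _ : nat => True) c) ->
  (forall N m n, N <= m -> N <= n -> qle (qten (c N) (f m)) (f n)) ->
  liminf_q f = limsup_q f.
Proof.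
  intros Hk Hc. apply qle_antisym; [apply liminf_le_limsup|].
  set (L := limsup_q f).
  apply qle_trans with (qten L (qSup (fun _ : nat => True) c)).
  { rewrite qten_comm. rewrite <- (qten_unit V L) at 1. now apply ten_mono_l. }
  unfold qSup at 1. rewrite qten_sup. apply qsup_least.
  intros z [y [[N [_ ->]] ->]].
  apply qle_trans with (qten (qSup (fun n => N <= n) f) (c N)).
  { apply ten_mono_l. unfold L, limsup_q. apply (inf_lb' (fun _ : nat => True) (fun N => qSup (fun n => N <= n) f) N). auto. }
  rewrite qten_comm. unfold qSup. rewrite qten_sup. apply qsup_least.
  intros z [y [[m [Hm ->]] ->]].
  apply qle_trans with (qInf (fun n => N <= n) f).
  - apply inf_gl'. intros n Hn. auto.
  - unfold liminf_q. apply (sup_ub' (fun _ : nat => True) (fun N => qInf (fun n => N <= n) f) N). auto.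
Qed.

End Q.

Theorem corollary3p12 (V : quantale) (X : Type) (a : X -> X -> V)
  (s : nat -> X) (x : X) :
  is_Vcategory V X a -> is_Cauchy V X a s ->
  liminf_q (fun n => a (s n) x) = limsup_q (fun n => a (s n) x) /\
  liminf_q (fun n => a x (s n)) = limsup_q (fun n => a x (s n)).
Proof.
  intros [Hr Ht] Hk. unfold is_Cauchy in Hk.
  set (c := fun N => qInf (fun nm : nat * nat => N <= fst nm /\ N <= snd nm)
                 (fun nm => a (s (fst nm)) (s (snd nm)))) in Hk.
  split; apply (main V _ c Hk); intros N m n Hm Hn.
  - apply qle_trans with (qten (a (s n) (s m)) (a (s m) x)); [|apply Ht].
    apply ten_mono_l. unfold c.
    apply (inf_lb' V _ (fun nm => a (s (fst nm)) (s (snd nm))) (n, m)). simpl; auto.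
  - rewrite qten_comm.
    apply qle_trans with (qten (a x (s m)) (a (s m) (s n))); [|apply Ht].
    apply ten_mono_r. unfold c.
    apply (inf_lb' V _ (fun nm => a (s (fst nm)) (s (snd nm))) (m, n)). simpl; auto.
Qed.
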